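(* Let $k\ge2$ and $c\in\mathcal{S}_k^\beta\setminus\{\mathbf{0}\}$. Then $w_H(c)=L_\beta(k)-q^{\nu(c)}L_\beta(k-1)$, where $L_\beta(m)=q^{(s-1)(m-1)}\frac{q^m-1}{q-1}$.
   Context: Let $R$ be a finite commutative chain ring with maximal ideal $\langle\gamma\rangle$, nilpotency index $s$ and residue field $R/\langle\gamma\rangle\cong\mathbb{F}_q$. Fix coset representatives $T=\{e_0,\dots,e_{q-1}\}$ with $e_0=0,e_1=1$, ordered $e_0<\dots<e_{q-1}$; each $r\in R$ is uniquely $\sum_{i=0}^{s-1}r_i\gamma^i$, $r_i\in T$; order $R$ by $x>y$ iff $x_i>y_i$ in $T$ for the largest $i$ with $x_i\neq y_i$; list $R=\{\rho_0,\dots,\rho_{q^s-1}\}$ increasingly. $\mathbf{a}^{(m)}$ is the constant vector of length $m$. Define $G_1^\alpha=(\rho_0\ \cdots\ \rho_{q^s-1})$ and, for $k>1$, $G_k^\alpha$ as the matrix of $q^s$ column blocks, the $j$-th having first row $\boldsymbol{\rho_j}^{(q^{s(k-1)})}$ and $G_{k-1}^\alpha$ below. List $\langle\gamma\rangle$ increasingly as $a_0\gamma<\dots<a_{q^{s-1}-1}\gamma$. Define $G_1^\beta=(1)$ and, for $k>1$, $G_k^\beta$ as the matrix with column blocks: first a block with first row $\mathbf{1}^{(q^{s(k-1)})}$ and $G_{k-1}^\alpha$ below; then for each $j=0,\dots,q^{s-1}-1$ a block with first row the constant vector with entry $a_j\gamma$ and $G_{k-1}^\beta$ below. $\mathcal{S}_k^\beta$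 is the $R$-submodule generated by the rows of $G_k^\beta$. $w_H$ is the Hamming weight. Valuation: for $x\in R\setminus\{0\}$, $\nu(x)$ is the largest $m$ with $x=\gamma^m\beta$, $\beta$ a unit; $\nu(0)=\infty$; for $x\in R^n$, $\nu(x)=\min_i\nu(x_i)$. *)

(* Defs.v *)
From HB Require Import structures.
From mathcomp Require Import all_boot all_order all_algebra.
Set Implicit Arguments. Unset Strict Implicit. Unset Printing Implicit Defensive.
Import Order.TTheory GRing.Theory.
Local Open Scope ring_scope.

Section ChainRing.
Variable R : finComUnitRingType.

Definition is_ideal (I : {set R}) : bool :=
  [&& 0 \in I,
      [forall x in I, forall y in I, x + y \in I] &
      [forall r : R, forall x in I, r * x \in I]].

Definition pideal (g : R) : {set R} := [set g * y | y : R].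

Definition chain_ring_with (g : R) (s : nat) : Prop :=
  [/\ (forall I J : {set R}, is_ideal I -> is_ideal J ->
          (I \subset J) \/ (J \subset I)),
      is_ideal (pideal g) /\ pideal g != [set: R]
      /\ (forall J : {set R}, is_ideal J -> pideal g \subset J ->
            J = pideal g \/ J = [set: R]),
      (0 < s)%N, g ^+ s = 0 & g ^+ s.-1 != 0].

(* T = [:: e_0; ...; e_{q-1}] is a list of coset representatives of R/<g>,
   listed in increasing order, with e_0 = 0 and e_1 = 1. *)
Definition coset_reps (g : R) (T : seq R) : Prop :=
  [/\ uniq T, (1 < size T)%N, T`_0 = 0, T`_1 = 1 &
      forall r : R, exists! i : 'I_(size T), r - T`_i \in pideal g].

Definition digits (g : R) (s : nat) (T : seq R) (r : R)
  : option {ffun 'I_s -> 'I_(size T)} :=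
  [pick d : {ffun 'I_s -> 'I_(size T)} |
     r == \sum_(i < s) T`_(d i) * g ^+ i].

(* key r = \sum_i d_i q^i : comparing keys is the order on R of the paper
   (largest index with differing digits decides). *)
Definition rkey (g : R) (s : nat) (T : seq R) (r : R) : nat :=
  if digits g s T r is Some d then (\sum_(i < s) d i * (size T) ^ i)%N else 0%N.

Definition rho_list (g : R) (s : nat) (T : seq R) : seq R :=
  sort (fun x y => (rkey g s T x <= rkey g s T y)%N) (enum R).

Definition gamma_list (g : R) (s : nat) (T : seq R) : seq R :=
  [seq x <- rho_list g s T | x \in pideal g].

(* Matrices are given as the list of their columns (each a seq R, top entry
   first).  Galpha m = G_m^alpha for m >= 1 (Galpha 0 is one empty column). *)
Fixpoint Galpha (g : R) (s : nat) (T : seq R) (m : nat) : seq (seq R) :=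
  match m with
  | 0 => [:: [::]]
  | m'.+1 => flatten [seq [seq rj :: col | col <- Galpha g s T m']
                     | rj <- rho_list g s T]
  end.

(* Gbeta_aux n = G_{n+1}^beta *)
Fixpoint Gbeta_aux (g : R) (s : nat) (T : seq R) (n : nat) : seq (seq R) :=
  match n with
  | 0 => [:: [:: 1]]
  | n'.+1 => [seq 1 :: col | col <- Galpha g s T n'.+1] ++
             flatten [seq [seq a :: col | col <- Gbeta_aux g s T n']
                     | a <- gamma_list g s T]
  end.

Definition Gbeta (g : R) (s : nat) (T : seq R) (k : nat) : seq (seq R) :=
  Gbeta_aux g s T k.-1.

(* S_k^beta : the R-submodule generated by the k rows of G_k^beta *)
Definition in_Sbeta (g : R) (s : nat) (T : seq R) (k : nat) (c : seq R) : Prop :=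
  exists lam : 'I_k -> R,
    c = [seq \sum_(i < k) lam i * col`_i | col <- Gbeta g s T k].

Definition wH (c : seq R) : nat := count (fun x => x != 0) c.

(* valuation of a nonzero element: largest m with x = g^m * beta, beta a unit
   (such m is < s since g^s = 0); the value at 0 is irrelevant below. *)
Definition nu (g : R) (s : nat) (x : R) : nat :=
  (\max_(m < s | [exists b : R, (b \is a GRing.unit) && (x == (g ^+ m * b)%R)]) m)%N.

(* valuation of a vector: minimum over its (nonzero) entries;
   entries equal to 0 have valuation infinity and are skipped. *)
Definition nuv (g : R) (s : nat) (c : seq R) : nat :=
  foldr minn s [seq nu g s x | x <- c & x != 0].

End ChainRing.

(* L_beta(m) = q^{(s-1)(m-1)} (q^m - 1)/(q - 1)  (exact division) *)
Definition Lbeta (q s m : nat) : nat :=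
  (q ^ ((s - 1) * (m - 1)) * ((q ^ m - 1) %/ (q - 1)))%N.

(* Main.v *)
Require Import Defs.
From HB Require Import structures.
From mathcomp Require Import all_boot all_order all_algebra.
From mathcomp Require Import ring zify.
Set Implicit Arguments. Unset Strict Implicit. Unset Printing Implicit Defensive.
Import GRing.Theory.
Local Open Scope ring_scope.

Section Alg.
Variable R : finComUnitRingType.
Variables (g : R) (s : nat) (T : seq R).
Hypothesis Hch : chain_ring_with g s.
Hypothesis Hct : coset_reps g T.

Lemma pidealP (a x : R) : reflect (exists y, x = a * y) (x \in pideal a).
Proof.
apply: (iffP imsetP) => [[y _ ->]|[y ->]]; first by exists y.
by exists y.
Qed.

Lemma pidealM (a y : R) : a * y \in pideal a.
Proof. by apply/pidealP; exists y. Qed.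

Lemma pideal0 (a : R) : 0 \in pideal a.
Proof. by apply/pidealP; exists 0; rewrite mulr0. Qed.

Lemma pidealD (a x y : R) : x \in pideal a -> y \in pideal a -> x + y \in pideal a.
Proof. by move=> /pidealP[x' ->] /pidealP[y' ->]; rewrite -mulrDr pidealM. Qed.

Lemma pidealN (a x : R) : x \in pideal a -> - x \in pideal a.
Proof. by move=> /pidealP[x' ->]; rewrite -mulrN pidealM. Qed.

Lemma pidealB (a x y : R) : x \in pideal a -> y \in pideal a -> x - y \in pideal a.
Proof. by move=> hx hy; apply: pidealD => //; apply: pidealN. Qed.

Lemma pidealMl (a r x : R) : x \in pideal a -> r * x \in pideal a.
Proof. by move=> /pidealP[x' ->]; rewrite mulrCA pidealM. Qed.

Lemma pidealxx (a : R) : a \in pideal a.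
Proof. by apply/pidealP; exists 1; rewrite mulr1. Qed.

Lemma pideal_is_ideal (a : R) : is_ideal (pideal a).
Proof.
apply/and3P; split; first exact: pideal0.
- by apply/forall_inP => x hx; apply/forall_inP => y hy; apply: pidealD.
- by apply/forallP => r; apply/forall_inP => x hx; apply: pidealMl.
Qed.

Lemma pideal1 : pideal (1 : R) = [set: R].
Proof. by apply/setP => x; rewrite inE; apply/pidealP; exists x; rewrite mul1r. Qed.

Lemma pideal_0 x : (x \in pideal (0 : R)) = (x == 0).
Proof.
apply/pidealP/eqP => [[y ->]|->]; first by rewrite mul0r.
by exists 0; rewrite mul0r.
Qed.

Lemma s_gt0 : (0 < s)%N.
Proof. by case: Hch. Qed.

Lemma gs0 : g ^+ s = 0.
Proof. by case: Hch. Qed.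

Lemma gj_neq0 j : (j < s)%N -> g ^+ j != 0.
Proof.
case: Hch => _ _ _ _ hn hj; apply: contra hn => /eqP h.
by rewrite -(subnKC (_ : j <= s.-1)%N) ?exprD ?h ?mul0r //; lia.
Qed.

Lemma unit_notg x : (x \is a GRing.unit) = (x \notin pideal g).
Proof.
case: Hch => Hc [_ [Hne Hmax]] _ _ _.
apply/idP/idP => [xu|xn].
  apply: contra Hne => /pidealP[y xy]; apply/eqP/setP => z; rewrite inE.
  apply/pidealP; exists (y * x^-1 * z).
  by rewrite !mulrA -xy mulrV // mul1r.
have [sub|sub] := Hc _ _ (pideal_is_ideal x) (pideal_is_ideal g).
  by move/subsetP: sub => /(_ x (pidealxx x)); rewrite (negbTE xn).
case: (Hmax _ (pideal_is_ideal x) sub) => h.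
  by move: (pidealxx x); rewrite h (negbTE xn).
have : 1 \in pideal x by rewrite h inE.
by move/pidealP => [y hy]; apply/unitrPr; exists y.
Qed.

Lemma pidealX_sub i j : (i <= j)%N -> {subset pideal (g ^+ j) <= pideal (g ^+ i)}.
Proof.
move=> hij x /pidealP[y ->]; rewrite -(subnKC hij) exprD -mulrA; exact: pidealM.
Qed.

Lemma pidealXs x : (x \in pideal (g ^+ s)) = (x == 0).
Proof. by rewrite gs0 pideal_0. Qed.

Lemma cancel_g j z : (j < s)%N -> g ^+ j * z = 0 -> z \in pideal g.
Proof.
move=> hj hz; apply: contraT; rewrite -unit_notg => zu.
by move: (gj_neq0 hj); rewrite -(mulr1 (g ^+ j)) -(mulrV zu) mulrA hz mul0r eqxx.
Qed.

Lemma divX mu d z : (mu + d <= s)%N ->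
  g ^+ mu * z \in pideal (g ^+ (mu + d)) -> z \in pideal (g ^+ d).
Proof.
elim: d z => [|d IH] z hs hz; first by rewrite expr0 pideal1 inE.
have hz' : g ^+ mu * z \in pideal (g ^+ (mu + d)) by apply: pidealX_sub hz; lia.
have hs' : (mu + d <= s)%N by lia.
have /pidealP[w zw] := IH z hs' hz'.
move: hz => /pidealP[y]; rewrite zw mulrA -exprD addnS exprS => h.
have : g ^+ (mu + d) * (w - g * y) = 0.
  by rewrite mulrBr h mulrA [g * _]mulrC subrr.
have hlt : (mu + d < s)%N by lia.
move/(cancel_g hlt) => hw.
have hw' : w \in pideal g.
  by rewrite -[w](subrK (g * y)); apply: pidealD => //; apply: pidealM.
move: hw' => /pidealP[w' ->]; rewrite mulrA -exprSr; exact: pidealM.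
Qed.

Lemma divX_iff mu j z : (mu <= j)%N -> (j <= s)%N ->
  (g ^+ mu * z \in pideal (g ^+ j)) = (z \in pideal (g ^+ (j - mu))).
Proof.
move=> h1 h2; apply/idP/idP => [|/pidealP[y ->]].
  by move=> hz; apply: (@divX mu); rewrite subnKC.
by rewrite mulrA -exprD subnKC // pidealM.
Qed.

End Alg.

Section Card.
Variable R : finComUnitRingType.
Variables (g : R) (s : nat) (T : seq R).
Hypothesis Hch : chain_ring_with g s.
Hypothesis Hct : coset_reps g T.
Local Notation q := (size T).

Lemma T_inj (i i' : 'I_q) : T`_i - T`_i' \in pideal g -> i = i'.
Proof.
case: Hct => _ _ _ _ /(_ (T`_i)) [i0 [_ hu]] h.
rewrite -(hu i) ?subrr ?pideal0 //; exact: hu.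
Qed.

Lemma card_step j : (j < s)%N ->
  #|pideal (g ^+ j)| = (q * #|pideal (g ^+ j.+1)|)%N.
Proof.
move=> hj.
pose A := setX [set: 'I_q] (pideal (g ^+ j.+1)).
pose f := fun p : 'I_q * R => g ^+ j * T`_(p.1) + p.2.
have -> : pideal (g ^+ j) = f @: A.
  apply/setP => x; apply/idP/imsetP => [/pidealP[r ->]|[[i y]]].
    case: Hct => _ _ _ _ /(_ r) [i [hi _]].
    move: hi => /pidealP[w hw].
    exists (i, g ^+ j.+1 * w); first by rewrite in_setX inE pidealM.
    by rewrite /f /= exprSr -mulrA -hw mulrBr addrC subrK.
  rewrite in_setX /= => /andP[_ hy] ->; rewrite /f /=.
  apply: pidealD; first exact: pidealM.
  exact: (pidealX_sub (leqnSn j)).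
rewrite card_in_imset ?cardsX ?cardsT ?card_ord //.
move=> [i y] [i' y']; rewrite !in_setX /= => /andP[_ hy] /andP[_ hy'].
rewrite /f /= => h.
have hT : g ^+ j * (T`_i - T`_i') \in pideal (g ^+ (j + 1)).
  have -> : g ^+ j * (T`_i - T`_i') = y' - y.
    rewrite mulrBr; transitivity ((g ^+ j * T`_i + y) - (g ^+ j * T`_i' + y') + (y' - y)).
      by ring.
    by rewrite h subrr add0r.
  by rewrite addn1; apply: pidealB.
have := divX Hch (_ : (j + 1 <= s)%N) hT; rewrite expr1 => /(_ ltac:(lia)) /T_inj hii.
subst i'; congr pair; by move/addrI: h.
Qed.

Lemma card_pideal j : (j <= s)%N -> #|pideal (g ^+ j)| = (q ^ (s - j))%N.
Proof.
move=> hj; rewrite -(subKn hj).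
elim: (s - j)%N (leq_subr j s) => [|d IH] hd.
  rewrite subn0 subnn expn0.
  have -> : pideal (g ^+ s) = [set 0].
    by apply/setP => x; rewrite inE (pidealXs Hch).
  by rewrite cards1.
rewrite card_step; last by lia.
have -> : (s - d.+1).+1 = (s - d)%N by lia.
by rewrite IH ?subKn -?expnS; lia.
Qed.

Lemma card_R : #|R| = (q ^ s)%N.
Proof.
by rewrite -cardsT -pideal1 -(expr0 g) card_pideal // subn0.
Qed.

End Card.

Section Val.
Variable R : finComUnitRingType.
Variables (g : R) (s : nat) (T : seq R).
Hypothesis Hch : chain_ring_with g s.
Hypothesis Hct : coset_reps g T.
Local Notation q := (size T).

Definition V (x : R) : nat := (\max_(j < s.+1 | x \in pideal (g ^+ j)) j)%N.

Lemma V_le x : (V x <= s)%N.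
Proof. by apply/bigmax_leqP => i _; rewrite -ltnS. Qed.

Lemma V_mem x : x \in pideal (g ^+ V x).
Proof.
rewrite /V; have [|i0 hi0 ->] := eq_bigmax_cond (fun j : 'I_s.+1 => nat_of_ord j)
   (A := fun j : 'I_s.+1 => x \in pideal (g ^+ j)).
  apply/card_gt0P; exists ord0; rewrite unfold_in /= expr0 pideal1 inE //.
exact: hi0.
Qed.

Lemma VP x j : (j <= s)%N -> (x \in pideal (g ^+ j)) = (j <= V x)%N.
Proof.
move=> hj; apply/idP/idP => [h|h].
  have := @leq_bigmax_cond _ (fun j : 'I_s.+1 => x \in pideal (g ^+ j)) (fun j => nat_of_ord j) (Ordinal (hj : (j < s.+1)%N)).
  by apply.
exact: (pidealX_sub h (V_mem x)).
Qed.

Lemma V0 : V 0 = s.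
Proof. by apply/eqP; rewrite eqn_leq V_le -VP // pideal0. Qed.

Lemma V_lt x : x != 0 -> (V x < s)%N.
Proof.
move=> hx; rewrite ltn_neqAle V_le andbT; apply: contra hx => /eqP h.
by rewrite -(pidealXs Hch) -h V_mem.
Qed.

Lemma V_dec x : x != 0 -> exists2 u, u \is a GRing.unit & x = g ^+ V x * u.
Proof.
move=> hx; have /pidealP[u hu] := V_mem x.
exists u => //; rewrite (unit_notg Hch); apply/negP => /pidealP[w hw].
have : x \in pideal (g ^+ (V x).+1) by rewrite {1}hu hw mulrA -exprSr pidealM.
by rewrite VP ?ltnn // V_lt.
Qed.

Lemma V_unique x m u : u \is a GRing.unit -> x = g ^+ m * u -> x != 0 -> m = V x.
Proof.
move=> hu hx hx0.
have hm : (m <= V x)%N.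
  have hms : (m <= s)%N.
    rewrite leqNgt; apply/negP => hms; move: hx0; rewrite hx.
    by rewrite -(subnKC (ltnW hms)) exprD (gs0 Hch) mul0r mul0r eqxx.
  by rewrite -VP // hx pidealM.
apply/eqP; rewrite eqn_leq hm /=; rewrite leqNgt; apply/negP => hlt.
have [v hv hxv] := V_dec hx0.
have hms : (m < s)%N by apply: leq_trans hlt (V_le x).
have : g ^+ m * (u - g ^+ (V x - m) * v) = 0.
  by rewrite mulrBr mulrA -exprD subnKC ?(ltnW hlt) // -hx -hxv subrr.
move/(cancel_g Hch hms) => hin.
have : u \in pideal g.
  rewrite -[u](subrK (g ^+ (V x - m) * v)); apply: pidealD => //.
  rewrite -(subnKC (_ : 1 <= V x - m)%N) ?exprD -?mulrA ?expr1 ?pidealM //; lia.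
by rewrite -(negbK (u \in _)) -(unit_notg Hch) hu.
Qed.

Lemma nu_V x : x != 0 -> nu g s x = V x.
Proof.
move=> hx; rewrite /nu; apply/eqP; rewrite eqn_leq; apply/andP; split.
  apply/bigmax_leqP => i /existsP[b /andP[hb /eqP hxb]].
  by rewrite (V_unique hb hxb hx).
have [u hu hxu] := V_dec hx.
have hlt := V_lt hx.
apply: (@leq_bigmax_cond _ _ (fun i : 'I_s => nat_of_ord i) (Ordinal hlt)).
by apply/existsP; exists u; rewrite hu /=; apply/eqP.
Qed.

Lemma V_g x : V (g * x) = minn (V x).+1 s.
Proof.
apply/eqP; rewrite eqn_leq; apply/andP; split.
  rewrite leq_min V_le andbT.
  case: (ltnP (V (g * x)) 1) => [h|h1]; first by lia.
  have hm : g * x \in pideal (g ^+ V (g * x)) by exact: V_mem.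
  have hle := V_le (g * x).
  have := divX_iff Hch x h1 hle; rewrite expr1 hm => /esym.
  rewrite VP; last by lia.
  lia.
rewrite -VP; last by rewrite geq_minr.
apply: (pidealX_sub (j:=(V x).+1)); first by rewrite geq_minl.
have /pidealP[y hy] := V_mem x; rewrite {1}hy mulrA -exprS; exact: pidealM.
Qed.

Definition Vl (l : seq R) : nat := foldr minn s (map V l).

Lemma Vl_le l : (Vl l <= s)%N.
Proof. by elim: l => [|a l IH] //=; rewrite geq_min IH orbT. Qed.

Lemma VlP l j : (j <= s)%N -> (j <= Vl l)%N = all (fun x => x \in pideal (g ^+ j)) l.
Proof.
move=> hj; elim: l => [|a l IH] //=; rewrite leq_min IH (VP _ hj) //.
Qed.

Lemma Vl_cons a l : Vl (a :: l) = minn (V a) (Vl l).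
Proof. by []. Qed.

End Val.

Section Sums.
Variable R : finComUnitRingType.
Variables (g : R) (s : nat) (T : seq R).
Hypothesis Hch : chain_ring_with g s.
Hypothesis Hct : coset_reps g T.
Local Notation q := (size T).
Local Notation V := (V g s).
Local Notation Vl := (Vl g s).

Lemma rho_sum (P : pred R) (F : R -> nat) :
  (\sum_(r <- rho_list g s T | P r) F r = \sum_(r | P r) F r)%N.
Proof.
rewrite /rho_list (perm_big (enum R)); last by rewrite perm_sort.
by rewrite big_enum_cond.
Qed.

Lemma gamma_sum (F : R -> nat) :
  (\sum_(r <- gamma_list g s T) F r = \sum_(r | r \in pideal g) F r)%N.
Proof. by rewrite /gamma_list big_filter rho_sum. Qed.

Lemma Galpha_sum m (P : pred (seq R)) (F : seq R -> nat) :
  (\sum_(v <- Galpha g s T m.+1 | P v) F v =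
   \sum_(r : R) \sum_(col <- Galpha g s T m | P (r :: col)) F (r :: col))%N.
Proof.
rewrite /= big_flatten /= big_map rho_sum; apply: eq_bigr => r _.
by rewrite big_map.
Qed.

Lemma Galpha_sum0 m (F : seq R -> nat) :
  (\sum_(v <- Galpha g s T m.+1) F v =
   \sum_(r : R) \sum_(col <- Galpha g s T m) F (r :: col))%N.
Proof. exact: (Galpha_sum m predT F). Qed.

Lemma Gbeta_sum n (F : seq R -> nat) :
  (\sum_(v <- Gbeta_aux g s T n.+1) F v =
   \sum_(col <- Galpha g s T n.+1) F (1%R :: col) +
   \sum_(a | a \in pideal g) \sum_(col <- Gbeta_aux g s T n) F (a :: col))%N.
Proof.
rewrite [Gbeta_aux _ _ _ _.+1]/= big_cat /= big_map; congr (_ + _)%N.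
by rewrite big_flatten /= big_map gamma_sum; apply: eq_bigr => a _; rewrite big_map.
Qed.

Lemma sum_bool (P : pred R) : (\sum_(r : R) (P r : nat) = #|[pred r | P r]|)%N.
Proof.
rewrite -sum1_card [RHS]big_mkcond /=; apply: eq_bigr => r _.
by rewrite inE; case: (P r).
Qed.

Lemma sum_unit (u : R) (F : R -> nat) : u \is a GRing.unit ->
  (\sum_(r : R) F (u * r)%R = \sum_(r : R) F r)%N.
Proof. by move=> hu; rewrite [RHS](reindex_inj (mulrI hu)). Qed.

Lemma sum_unit_g (u : R) (F : R -> nat) : u \is a GRing.unit ->
  (\sum_(r | r \in pideal g) F (u * r)%R = \sum_(r | r \in pideal g) F r)%N.
Proof.
move=> hu; rewrite [RHS](reindex_inj (mulrI hu)); apply: eq_bigl => r.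
apply/idP/idP; first exact: pidealMl.
by move=> h; rewrite -[r](mulKr hu); apply: pidealMl.
Qed.

Lemma q_gt0 : (0 < q)%N.
Proof. by case: Hct => _ h _ _ _; lia. Qed.

Lemma SV mu j x : (mu <= j)%N -> (j <= s)%N ->
  (\sum_(r : R) (((x + g ^+ mu * r)%R \in pideal (g ^+ j)) : nat) =
   (x \in pideal (g ^+ mu)) * q ^ (s - j + mu))%N.
Proof.
move=> h1 h2.
case: (boolP (x \in pideal (g ^+ mu))) => hx; last first.
  rewrite mul0n big1 // => r _; apply/eqP; rewrite eqb0; apply: contra hx => h.
  rewrite -(addrK (g ^+ mu * r) x); apply: pidealB; last exact: pidealM.
  exact: (pidealX_sub h1 h).
move: hx => /pidealP[w ->]; rewrite mul1n.
under eq_bigr do rewrite -mulrDr (divX_iff Hch _ h1 h2).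
rewrite [LHS](reindex_inj (addIr (- w))) /=.
under eq_bigr do rewrite addrC subrK.
rewrite [in RHS](_ : s - j + mu = s - (j - mu))%N; last by lia.
rewrite sum_bool -(card_pideal Hch Hct (_ : (j - mu <= s)%N)); last by lia.
by apply: eq_card => r; rewrite inE.
Qed.


Lemma SG (F : R -> nat) :
  (\sum_(r | r \in pideal g) F r * q = \sum_(r : R) F (g * r)%R)%N.
Proof.
rewrite [RHS](partition_big (fun r => (g * r)%R) (mem (pideal g))) /=; last first.
  by move=> r _; apply: pidealM.
apply: eq_bigr => j hj.
rewrite (eq_bigr (fun _ => F j)); last by move=> r /eqP ->.
rewrite big_mkcond /=.
rewrite (eq_bigr (fun i => ((g * i == j)%R : nat) * F j)%N); last first.
  by move=> i _; case: (_ == _); rewrite ?mul1n ?mul0n.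
rewrite -big_distrl /= mulnC; congr (_ * _)%N.
have hs := s_gt0 Hch.
have := SV (mu:=1) (- j) hs (leqnn s); rewrite expr1 pidealN // mul1n subnn add0n expn1 => <-.
apply: eq_bigr => r _; rewrite (pidealXs Hch) addrC subr_eq0.
by case: (_ == _).
Qed.

Fixpoint dot (l v : seq R) : R :=
  if l is a :: l' then (if v is b :: v' then a * b + dot l' v' else 0) else 0.

Lemma Zalpha l t :
  ((\sum_(v <- Galpha g s T (size l)) ((t + dot l v == 0)%R : nat)) * q ^ (s - Vl l) =
   (t \in pideal (g ^+ Vl l)) * q ^ (s * size l))%N.
Proof.
elim: l t => [|a l IH] t.
  rewrite /= big_seq1 addr0 (_ : Vl [::] = s) // subnn muln0 expn0 !muln1.
  by rewrite (pidealXs Hch).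
have hq := q_gt0.
rewrite [size _]/= Galpha_sum0.
have hnu := Vl_le g s l.
set nu' := Vl l.
apply/eqP; rewrite -(eqn_pmul2r (_ : 0 < q ^ (s - nu'))%N) ?expn_gt0 ?hq //; apply/eqP.
rewrite big_distrl /= big_distrl /=.
transitivity (\sum_(r : R) (((t + a * r)%R \in pideal (g ^+ nu')) * q ^ (s * size l)) * q ^ (s - Vl (a :: l)))%N.
  apply: eq_bigr => r _; rewrite -mulnA [(_ * q ^ (s - nu'))%N]mulnC mulnA; congr (_ * _)%N.
  rewrite -IH; congr (_ * _)%N; apply: eq_bigr => col _ /=; by rewrite addrA.
rewrite -!big_distrl /=.
rewrite Vl_cons -/nu'.
case: (leqP nu' (V a)) => hva.
  have ha : a \in pideal (g ^+ nu') by rewrite (VP g (s:=s)).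
  idtac.
  have E r : (t + a * r \in pideal (g ^+ nu')) = (t \in pideal (g ^+ nu')).
    have har : a * r \in pideal (g ^+ nu') by rewrite mulrC; apply: pidealMl.
    apply/idP/idP => h; last exact: pidealD.
    by rewrite -(addrK (a * r) t); apply: pidealB.
  rewrite (eq_bigr (fun _ => (t \in pideal (g ^+ nu')) : nat)); last by move=> r _; rewrite E.
  rewrite sum_nat_const (_ : #|xpredT| = #|R|) // (card_R Hch Hct) mulnS expnD.
  ring.
have ha0 : a != 0.
  by apply: contraTneq hva => ->; rewrite (V0 g s) -leqNgt.
have [u hu hau] := V_dec Hch ha0.
set mu := V a in hva hau *.
rewrite (eq_bigr (fun i => (fun r => ((t + g ^+ mu * r)%R \in pideal (g ^+ nu')) : nat) (u * i)%R)); last first.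
  by move=> i _ /=; rewrite hau mulrA.
rewrite (sum_unit (fun r => ((t + g ^+ mu * r)%R \in pideal (g ^+ nu')) : nat) hu).
rewrite SV; [|exact: ltnW|exact: hnu].
have := V_le g s a; rewrite -/mu => hmu.
rewrite -!mulnA; congr (_ * _)%N; rewrite -!expnD; congr (q ^ _)%N.
lia.
Qed.

End Sums.

Section Orbit.
Variable R : finComUnitRingType.
Variables (g : R) (s : nat) (T : seq R).
Hypothesis Hch : chain_ring_with g s.
Hypothesis Hct : coset_reps g T.
Local Notation q := (size T).
Local Notation allg := (all (fun x : R => x \in pideal g)).

Lemma sum_split_g (L : seq (seq R)) (Q : pred (seq R)) (F : R -> seq R -> nat) :
  (\sum_(r : R) \sum_(c <- L | (r \in pideal g) && Q c) F r c =
   \sum_(r | r \in pideal g) \sum_(c <- L | Q c) F r c)%N.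
Proof.
rewrite [RHS]big_mkcond; apply: eq_bigr => r _.
by case: (r \in pideal g) => //=; rewrite big_pred0.
Qed.

Lemma sum_split_g2 (L : seq (seq R)) (F : R -> seq R -> nat) :
  (\sum_(r : R) \sum_(c <- L | allg (r :: c)) F r c =
   \sum_(r | r \in pideal g) \sum_(c <- L | allg c) F r c)%N.
Proof. exact: sum_split_g. Qed.

Lemma RG m (F : seq R -> nat) :
  ((\sum_(v <- Galpha g s T m | allg v) F v) * q ^ m =
   \sum_(v <- Galpha g s T m) F (map (fun x => (g * x)%R) v))%N.
Proof.
elim: m F => [|m IH] F; first by rewrite /= !big_cons !big_nil /= expn0 muln1.
rewrite Galpha_sum Galpha_sum0 /= sum_split_g.
transitivity (\sum_(r | r \in pideal g)
   ((\sum_(c <- Galpha g s T m | allg c) F (r :: c)) * q ^ m) * q)%N.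
  by rewrite -big_distrl -big_distrl /= expnS; ring.
transitivity (\sum_(r | r \in pideal g)
   (\sum_(c <- Galpha g s T m) F (r :: map (fun x => (g * x)%R) c)) * q)%N.
  by apply: eq_bigr => r _; rewrite IH.
by rewrite (SG Hch Hct (fun r => \sum_(c <- Galpha g s T m) F (r :: map (fun x => (g * x)%R) c))%N).
Qed.

Lemma SA m (u : R) (H : seq R -> nat) : u \is a GRing.unit ->
  (\sum_(v <- Galpha g s T m) H (map (fun x => (u * x)%R) v) =
   \sum_(v <- Galpha g s T m) H v)%N.
Proof.
move=> hu; elim: m H => [|m IH] H; first by rewrite /= !big_cons !big_nil /=.
rewrite !Galpha_sum0 /=.
transitivity (\sum_(r : R) (fun r => \sum_(c <- Galpha g s T m) H (r :: c))%N ((u * r)%R)).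
  by apply: eq_bigr => r _ /=; rewrite (IH (fun c => H ((u * r)%R :: c))).
exact: sum_unit.
Qed.

Definition nU := #|~: pideal g|.

Lemma OB n (F : seq R -> nat) :
  (forall u v, u \is a GRing.unit -> F (map (fun x => (u * x)%R) v) = F v) ->
  (nU * \sum_(c <- Gbeta_aux g s T n) F c +
   \sum_(v <- Galpha g s T n.+1 | allg v) F v =
   \sum_(v <- Galpha g s T n.+1) F v)%N.
Proof.
elim: n F => [|n IH] F hF.
  rewrite [Gbeta_aux _ _ _ 0]/= big_seq1 Galpha_sum Galpha_sum0 /=.
  rewrite [in RHS](eq_bigr (fun r => F [:: r])); last by move=> r _; rewrite big_seq1.
  rewrite [X in (_ + X)%N](eq_bigr (fun r => if r \in pideal g then F [:: r] else 0%N)); last first.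
    by move=> r _; rewrite big_cons big_nil /= andbT; case: (_ \in _); rewrite ?addn0.
  rewrite -big_mkcond /= [RHS](bigID (fun r => r \in pideal g)) /= addnC; congr (_ + _)%N.
  rewrite (eq_bigr (fun _ => F [:: 1])); last first.
    move=> r hr; rewrite -[RHS](hF r); first by rewrite /= mulr1.
    by rewrite (unit_notg Hch).
  rewrite /nU -sum_nat_const; apply: eq_bigl => r; by rewrite inE.
pose G := fun col => (\sum_(a | a \in pideal g) F (a :: col))%N.
have hG : forall u v, u \is a GRing.unit -> G (map (fun x => (u * x)%R) v) = G v.
  move=> u v hu; rewrite /G; have hui : u^-1 \is a GRing.unit by rewrite unitrV.
  transitivity (\sum_(a | a \in pideal g) (fun a => F (a :: v)) (u^-1 * a)%R)%N.
    apply: eq_bigr => a _ /=; rewrite -(hF u^-1 _ hui) /=; congr (F (_ :: _)).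
    by rewrite -map_comp map_id_in // => x _ /=; rewrite mulKr.
  exact: sum_unit_g hui.
have IHG := IH G hG.
rewrite Gbeta_sum [X in (_ + X)%N = _]Galpha_sum [RHS]Galpha_sum0 sum_split_g2.
rewrite (exchange_big _ (index_enum R) (Gbeta_aux g s T n)) /=.
rewrite (exchange_big _ (index_enum R) (Galpha g s T n.+1)) /=.
rewrite [RHS](bigID (fun r => r \in pideal g)) /=.
rewrite (exchange_big _ (index_enum R) (Galpha g s T n.+1)) /=.
rewrite (eq_bigr (fun _ => \sum_(col <- Galpha g s T n.+1) F (1%R :: col))%N (P := fun r => r \notin pideal g)); last first.
  move=> r hr; have hu : r \is a GRing.unit by rewrite (unit_notg Hch).
  have hui : r^-1 \is a GRing.unit by rewrite unitrV.
  rewrite -(SA _ (fun c => F (1%R :: c)) hui); apply: eq_bigr => col _.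
  by rewrite -(hF r^-1 _ hui) /= mulVr.
rewrite (_ : \sum_(i | i \notin pideal g) _ = nU * \sum_(col <- Galpha g s T n.+1) F (1%R :: col))%N; last first.
  by rewrite /nU -sum_nat_const; apply: eq_bigl => r; rewrite inE.
rewrite -IHG /G; ring.
Qed.

End Orbit.

Section Lists.
Variable R : finComUnitRingType.
Variables (g : R) (s : nat) (T : seq R).
Local Notation dot := (@dot R).

Lemma mem_rho r : r \in rho_list g s T.
Proof. by rewrite /rho_list mem_sort mem_enum. Qed.

Lemma mem_Galpha m v : size v = m -> v \in Galpha g s T m.
Proof.
elim: m v => [|m IH] [|r v] //= [hv].
apply/flattenP; exists [seq r :: col | col <- Galpha g s T m].
  by apply: (map_f (fun rj => [seq rj :: col | col <- Galpha g s T m])); apply: mem_rho.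
by apply: map_f; apply: IH.
Qed.

Lemma size_Galpha m v : v \in Galpha g s T m -> size v = m.
Proof.
elim: m v => [|m IH] v /=; first by rewrite inE => /eqP ->.
move/flattenP => [c /mapP[r _ ->] /mapP[col hcol ->]] /=.
by rewrite (IH _ hcol).
Qed.

Lemma size_Gbeta n v : v \in Gbeta_aux g s T n -> size v = n.+1.
Proof.
elim: n v => [|n IH] v /=; first by rewrite inE => /eqP ->.
rewrite mem_cat => /orP[/mapP[col hcol ->]|].
  by rewrite /= (@size_Galpha n.+1 col hcol).
move/flattenP => [c /mapP[r _ ->] /mapP[col hcol ->]] /=.
by rewrite (IH _ hcol).
Qed.

Lemma dot_nseq0 l m : dot l (nseq m 0) = 0.
Proof. by elim: l m => [|a l IH] [|m] //=; rewrite mulr0 add0r IH. Qed.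

Lemma e_in n l i : size l = n.+1 -> (i < n.+1)%N ->
  exists2 col, col \in Gbeta_aux g s T n & dot l col = l`_i.
Proof.
elim: n l i => [|n IH] [|a l] i //=.
  case: l => // _; case: i => // _; exists [:: 1]; first by rewrite inE.
  by rewrite /= mulr1 addr0.
move=> [hl]; case: i => [_|i hi].
  exists (1 :: nseq n.+1 0).
    rewrite mem_cat; apply/orP; left; apply: map_f; apply: (@mem_Galpha n.+1).
    by rewrite size_nseq.
  by rewrite /= mulr1 (dot_nseq0 l n.+1) addr0.
have [col hcol hd] := IH l i hl hi.
exists (0 :: col); last by rewrite /= mulr0 add0r hd.
rewrite mem_cat; apply/orP; right; apply/flattenP.
exists [seq 0 :: c | c <- Gbeta_aux g s T n]; last exact: map_f.
apply: (map_f (fun a => [seq a :: c | c <- Gbeta_aux g s T n])).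
by rewrite mem_filter mem_rho pideal0.
Qed.

Lemma dot_sum l v : size v = size l -> dot l v = \sum_(i < size l) l`_i * v`_i.
Proof.
elim: l v => [|a l IH] [|b v] //=; first by rewrite big_ord0.
by move=> [hv]; rewrite big_ord_recl /= IH.
Qed.

Lemma dot_mem l v (I : R) : all (fun x => x \in pideal I) l -> dot l v \in pideal I.
Proof.
elim: l v => [|a l IH] [|b v] /=; rewrite ?pideal0 //.
by move=> /andP[ha hl]; apply: pidealD; [rewrite mulrC; apply: pidealMl | apply: IH].
Qed.

Lemma dot_scale l v u : dot l (map (fun x => u * x) v) = u * dot l v.
Proof.
elim: l v => [|a l IH] [|b v] /=; rewrite ?mulr0 //.
by rewrite IH mulrDr mulrCA.
Qed.

Lemma dot_map l v (a : R) : dot l (map (fun x => a * x) v) = dot (map (fun x => a * x) l) v.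
Proof.
elim: l v => [|c l IH] [|b v] //=.
by rewrite IH mulrCA mulrA.
Qed.

Lemma count_sum (P : pred R) (c : seq R) : count P c = (\sum_(x <- c) (P x : nat))%N.
Proof. by elim: c => [|x c IH] /=; rewrite ?big_nil ?big_cons // IH. Qed.

End Lists.

Lemma geom j q : (0 < q)%N -> ((q - 1) * ((q ^ j - 1) %/ (q - 1)) + 1 = q ^ j)%N.
Proof.
move=> hq.
case: (posnP q.-1) => hq1.
  have -> : q = 1%N by lia.
  by rewrite exp1n subnn mul0n.
rewrite !subn1 predn_exp mulKn // -predn_exp addn1 prednK // expn_gt0 hq //.
Qed.

Lemma arith (q s k nu N Z Y Y1 Za Zg nU : nat) : (1 < q)%N -> (0 < s)%N -> (2 <= k)%N -> (nu < s)%N ->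
  (nU * Z + Y = Za)%N -> (Za * q ^ (s - nu) = q ^ (s * k))%N ->
  (Y * q ^ k = Zg)%N -> (Zg * q ^ (s - nu.+1) = q ^ (s * k))%N ->
  (nU * N + Y1 = q ^ (s * k))%N -> (Y1 * q ^ k = q ^ (s * k))%N ->
  (q ^ (s - 1) + nU = q ^ s)%N ->
  N = Lbeta q s k /\ Z = (q ^ nu * Lbeta q s k.-1)%N.
Proof.
move=> hq hs hk hnu e1 e2 e3 e4 e5 e6 e7.
have hq0 : (0 < q)%N by lia.
case: s hs hnu e2 e4 e7 e5 e6 => [//|s'] _ hnu e2 e4 e7 e5 e6.
case: k hk e2 e4 e5 e6 e3 => [//|[//|m]] _ e2 e4 e5 e6 e3.
set P := (q ^ s')%N. set W := (q ^ (s' * m))%N. set Qm := (q ^ m)%N. set Qn := (q ^ nu)%N.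
have pos : forall e, (0 < q ^ e)%N by move=> e; rewrite expn_gt0 hq0.
have hsk : (q ^ (s'.+1 * m.+2) = W * P * P * Qm * q ^ 2)%N.
  rewrite /W /P /Qm -!expnD; congr (_ ^ _)%N; nia.
have hk2 : (q ^ m.+2 = Qm * q ^ 2)%N by rewrite /Qm -expnD addn2.
have hZa : Za = (Qn * W * P * Qm * q ^ 1)%N.
  apply/eqP; rewrite -(eqn_pmul2r (pos (s'.+1 - nu)%N)) e2 hsk; apply/eqP.
  rewrite /W /P /Qm /Qn -!expnD; congr (_ ^ _)%N; nia.
have hZg : Zg = (Qn * W * P * Qm * q ^ 2)%N.
  apply/eqP; rewrite -(eqn_pmul2r (pos (s'.+1 - nu.+1)%N)) e4 hsk; apply/eqP.
  rewrite /W /P /Qm /Qn -!expnD; congr (_ ^ _)%N; nia.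
have hY : Y = (Qn * W * P)%N.
  apply/eqP; rewrite -(eqn_pmul2r (pos m.+2)) e3 hZg hk2; apply/eqP; ring.
have hY1 : Y1 = (W * P * P)%N.
  apply/eqP; rewrite -(eqn_pmul2r (pos m.+2)) e6 hsk hk2; apply/eqP; ring.
have hnU : nU = (P * (q - 1))%N.
  have e7' : (P + nU = P * q)%N by rewrite /P -expnSr -e7 subSS subn0.
  by rewrite mulnBr muln1 -e7' addKn.
have hPd : (0 < P * (q - 1))%N by rewrite muln_gt0 pos; lia.
have g2 := @geom m.+2 q hq0. have g1 := @geom m.+1 q hq0.
rewrite /Lbeta (_ : m.+2.-1 = m.+1) // !subSS !subn0.
have -> : (q ^ (s' * m.+1) = W * P)%N by rewrite /W /P -expnD mulnS addnC.
set G2 := ((q ^ m.+2 - 1) %/ (q - 1))%N in g2 *.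
set G1 := ((q ^ m.+1 - 1) %/ (q - 1))%N in g1 *.
rewrite -/W.
split.
  apply/eqP; rewrite -(eqn_pmul2l hPd); apply/eqP.
  apply: (@addIn (W * P * P)%N); rewrite -hnU -hY1 e5 hsk.
  transitivity (W * P * P * (Qm * q ^ 2))%N; first by ring.
  rewrite -hk2 -g2 hY1 hnU; ring.
apply/eqP; rewrite -(eqn_pmul2l hPd); apply/eqP.
apply: (@addIn (Qn * W * P)%N); rewrite -hnU -hY e1 hZa.
transitivity (Qn * W * P * (Qm * q ^ 1))%N; first by ring.
rewrite (_ : Qm * q ^ 1 = q ^ m.+1)%N; last by rewrite /Qm -expnD addn1.
rewrite -g1 hY hnU /W; ring.
Qed.

Section Final.
Variable R : finComUnitRingType.
Variables (g : R) (s : nat) (T : seq R).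
Hypothesis Hch : chain_ring_with g s.
Hypothesis Hct : coset_reps g T.
Local Notation q := (size T).
Local Notation V := (V g s).
Local Notation Vl := (Vl g s).

Lemma Vl_g l : Vl (map (fun x => g * x) l) = minn (Vl l).+1 s.
Proof.
elim: l => [|a l IH] /=; first by rewrite (_ : Vl [::] = s) //; lia.
rewrite !Vl_cons IH (V_g Hch) /=.
have := Vl_le g s l; have := V_le g s a; lia.
Qed.

Lemma sum1_Galpha m : (\sum_(v <- Galpha g s T m) 1 = q ^ (s * m))%N.
Proof.
elim: m => [|m IH]; first by rewrite /= big_seq1 muln0 expn0.
rewrite Galpha_sum0.
transitivity (\sum_(r : R) q ^ (s * m))%N; first by apply: eq_bigr => r _; rewrite -IH.
rewrite sum_nat_const (_ : #|xpredT| = #|R|) // (card_R Hch Hct) -expnD mulnS //.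
Qed.

Lemma nU_val : (q ^ (s - 1) + nU g = q ^ s)%N.
Proof.
rewrite /nU -(card_pideal Hch Hct (_ : 1 <= s)%N) ?(s_gt0 Hch) // expr1 cardsC.
by rewrite (card_R Hch Hct).
Qed.

Lemma Vl_le_mem (c : seq R) x : x \in c -> (Vl c <= V x)%N.
Proof.
elim: c => [|y c IH] //=; rewrite inE => /orP[/eqP ->|h].
  by rewrite Vl_cons geq_minl.
by rewrite Vl_cons; apply: leq_trans (geq_minr _ _) (IH h).
Qed.

Lemma nuv_Vl (c : seq R) : nuv g s c = Vl c.
Proof.
elim: c => [|x c IH] //=.
rewrite /nuv /=; case: (eqVneq x 0) => [->|hx] /=.
  rewrite -/(nuv g s c) IH Vl_cons (V0 g s); have := Vl_le g s c; lia.
by rewrite -/(nuv g s c) IH Vl_cons (nu_V Hch hx).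
Qed.

Lemma count_sumT (X : Type) (P : pred X) (c : seq X) : count P c = (\sum_(x <- c) (P x : nat))%N.
Proof. by elim: c => [|x c IH] /=; rewrite ?big_nil ?big_cons // IH. Qed.

End Final.

Lemma dot_mkseq (R : finComUnitRingType) n (lam : 'I_n.+1 -> R) (v : seq R) :
  size v = n.+1 ->
  \sum_(i < n.+1) lam i * v`_i = dot (mkseq (fun i => lam (inord i)) n.+1) v.
Proof.
move=> hv; rewrite dot_sum ?size_mkseq //.
by apply: eq_bigr => i _; rewrite nth_mkseq // inord_val.
Qed.

Unset Implicit Arguments. Set Strict Implicit.

Theorem corollary3p21 (R : finComUnitRingType) (g : R) (s : nat) (T : seq R)
    (k : nat) (c : seq R) :
  chain_ring_with g s ->
  coset_reps g T ->
  (2 <= k)%N ->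
  in_Sbeta g s T k c ->
  c != nseq (size c) 0 ->
  (wH c)%:Z =
    (Lbeta (size T) s k)%:Z
    - ((size T) ^ (nuv g s c) * Lbeta (size T) s k.-1)%:Z.
Proof.
move=> Hch Hct hk [lam ->] hc0.
case: k hk lam hc0 => [//|n] hk lam hc0.
have hq : (1 < size T)%N by case: Hct.
have hs := s_gt0 Hch.
pose l := mkseq (fun i => lam (inord i)) n.+1.
have hl : size l = n.+1 by rewrite size_mkseq.
have hc : [seq \sum_(i < n.+1) lam i * col`_i | col <- Gbeta g s T n.+1] =
          [seq dot l col | col <- Gbeta_aux g s T n].
  apply/eq_in_map => col hcol.
  have hsz := size_Gbeta hcol.
  by rewrite dot_mkseq.
rewrite hc in hc0 *.
set cw := [seq dot l col | col <- Gbeta_aux g s T n].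
set Z := (\sum_(col <- Gbeta_aux g s T n) ((dot l col == 0%R) : nat))%N.
set N := (\sum_(col <- Gbeta_aux g s T n) 1)%N.
have hW : (wH cw + Z = N)%N.
  rewrite /wH /N sum1_size -(size_map (dot l)) -/cw -(count_predC (fun x => x != 0) cw).
  congr addn; rewrite /cw count_map count_sumT; apply: eq_bigr => col _ /=.
  by rewrite negbK.
have hVc : Vl g s cw = Vl g s l.
  apply/eqP; rewrite eqn_leq; apply/andP; split.
    rewrite (VlP g (s:=s)) ?Vl_le //; apply/allP => x hx.
    have hi : (index x l < n.+1)%N by rewrite -hl index_mem.
    have [col hcol hd] := e_in g s T hl hi.
    rewrite (nth_index 0 hx) in hd.
    have : all (fun y => y \in pideal (g ^+ Vl g s cw)) cw by rewrite -(VlP g (s:=s)) ?Vl_le.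
    by move/allP/(_ (dot l col) (map_f _ hcol)); rewrite hd.
  rewrite (VlP g (s:=s)) ?Vl_le //; apply/allP => x /mapP[col _ ->]; apply: dot_mem.
  by rewrite -(VlP g (s:=s)) ?Vl_le.
have hnu : nuv g s cw = Vl g s l by rewrite nuv_Vl.
have hlt : (Vl g s l < s)%N.
  have : has (fun x => x != 0) cw.
    move: hc0; apply: contraNT => /hasPn h.
    apply/eqP/all_pred1P/allP => x hx.
    by have := h x hx; rewrite negbK.
  move/hasP => [x hx hx0]; have := V_lt Hch hx0; have := Vl_le_mem g s hx; lia.
set nu := Vl g s l in hnu hlt *.
pose F1 := fun v => ((dot l v == 0) : nat).
have hF1 : forall u v, u \is a GRing.unit -> F1 (map (fun x => u * x) v) = F1 v.
  by move=> u v hu; rewrite /F1 dot_scale mulrI_eq0 //; exact: mulrI hu.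
have e1 := OB T Hch n hF1.
have e2 : ((\sum_(v <- Galpha g s T n.+1) F1 v) * size T ^ (s - nu) = size T ^ (s * n.+1))%N.
  have := Zalpha Hch Hct l 0; rewrite hl pideal0 mul1n => <-; congr (_ * _)%N.
  by apply: eq_bigr => v _; rewrite /F1 add0r.
have e3 : ((\sum_(v <- Galpha g s T n.+1 | all (fun x => x \in pideal g) v) F1 v) * size T ^ n.+1 =
     \sum_(v <- Galpha g s T n.+1) ((dot (map (fun x => (g * x)%R) l) v == 0%R) : nat))%N.
  by rewrite RG //; apply: eq_bigr => v _; rewrite /F1 dot_map.
have e4 : ((\sum_(v <- Galpha g s T n.+1) ((dot (map (fun x => (g * x)%R) l) v == 0%R) : nat)) *
    size T ^ (s - nu.+1) = size T ^ (s * n.+1))%N.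
  have := Zalpha Hch Hct (map (fun x => (g * x)%R) l) 0.
  rewrite size_map hl (Vl_g Hch) -/nu (minn_idPl hlt) pideal0 mul1n => <-; congr (_ * _)%N.
  by apply: eq_bigr => v _; rewrite add0r.
have e5 := OB T Hch n (F := fun _ => 1%N) (fun _ _ _ => erefl).
rewrite (sum1_Galpha Hch Hct) in e5.
have e6 := RG Hch Hct n.+1 (fun _ => 1%N).
rewrite (sum1_Galpha Hch Hct) in e6.
have e7 := nU_val Hch Hct.
have [hN hZ] := arith hq hs hk hlt e1 e2 e3 e4 e5 e6 e7.
by rewrite hnu -hZ -hN -/N -/Z -hW PoszD addrK.
Qed.
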